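(* Let $d\ge2$, $\delta\in[0,1/d)$, and let $N$ be a $\delta$-upper bounded matrix of dimension $d\times d$. Then $N$ is invertible and $$\|N^{-1}\|_\infty\le\frac{d-1}{1-d\delta}.$$
   Context: A $d\times d$ matrix $N$ is $\delta$-upper bounded if it is stochastic (non-negative entries, rows summing to $1$), $N_{i,i}\ge1-(d-1)\delta$ for all $i$, and $N_{i,j}\le\delta$ for all $i\ne j$. For a matrix $A$, $\|A\|_\infty=\sup_{x\ne0}\|Ax\|_\infty/\|x\|_\infty=\max_i\sum_j|A_{i,j}|$. *)

(* Defs.v *)
From HB Require Import structures.
From mathcomp Require Import all_boot all_order all_algebra.
Set Implicit Arguments. Unset Strict Implicit. Unset Printing Implicit Defensive.
Import Order.TTheory GRing.Theory Num.Theory.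
Local Open Scope ring_scope.

Definition stochastic (R : realFieldType) (d : nat) (N : 'M[R]_d) : Prop :=
  (forall i j, 0 <= N i j) /\ (forall i, \sum_j N i j = 1).

Definition delta_upper_bounded (R : realFieldType) (d : nat) (delta : R)
    (N : 'M[R]_d) : Prop :=
  [/\ stochastic N,
      (forall i, 1 - (d%:R - 1) * delta <= N i i)
    & (forall i j, i != j -> N i j <= delta)].

Definition inf_norm (R : realFieldType) (m n : nat) (A : 'M[R]_(m, n)) : R :=
  \big[Num.max/0]_(i < m) \sum_(j < n) `|A i j|.

(* Main.v *)
Require Import Defs.
From mathcomp Require Import all_boot all_order all_algebra.
From mathcomp Require Import ring lra.
Import Order.TTheory GRing.Theory Num.Theory.
Local Open Scope ring_scope.
Lemma argmax_ex (R : realFieldType) d (i0 : 'I_d) (x : 'I_d -> R) :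
  exists i, forall j, x j <= x i.
Proof.
case: (@arg_maxP _ _ _ i0 xpredT x isT) => i _ Hi.
by exists i => j; apply: Hi.
Qed.

Lemma argmin_ex (R : realFieldType) d (i0 : 'I_d) (x : 'I_d -> R) :
  exists i, forall j, x i <= x j.
Proof.
case: (@arg_minP _ _ _ i0 xpredT x isT) => i _ Hi.
by exists i => j; apply: Hi.
Qed.

Lemma arith (R : realFieldType) (D de a b s m : R) :
  2 <= D -> 0 <= de -> 0 < 1 - D * de -> 0 <= m ->
  (1 - D * de) * a + de * s <= m ->
  - m <= (1 - D * de) * b + de * s ->
  a + (D - 1) * b <= s ->
  (1 - D * de) * a <= (D - 1) * m.
Proof.
set c := 1 - D * de => HD Hde Hc Hm H1 H2 H3.
have [Hs|Hs] := lerP 0 s.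
  have : de * s >= 0 by apply: mulr_ge0.
  nra.
have Hds : de * s <= 0 by nra.
have Hb : c * (- b) <= m by nra.
have H4 : c * (- de * s) <= - c * de * a + de * (D - 1) * m.
  have : - s <= - a + (D - 1) * (- b) by lra.
  move=> H5.
  have : c * de * (- s) <= c * de * (- a + (D - 1) * (- b)).
    by apply: ler_wpM2l => //; nra.
  have : de * (D - 1) * (c * (- b)) <= de * (D - 1) * m.
    by apply: ler_wpM2l => //; nra.
  nra.
have H1' : c * (c * a + de * s) <= c * m by apply: ler_wpM2l => //; lra.
have H6 : c * a * (c + de) <= m * (c + de * (D - 1)) by move: H1' H4; clearbody c; move=> *; lra.
have H8 : 0 <= (D - 2) * (m * c) by apply: mulr_ge0; [lra|apply: mulr_ge0; lra].
have H7 : m * (c + de * (D - 1)) <= (D - 1) * m * (c + de) by lra.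
have Hcd : 0 < c + de by lra.
have : c * a * (c + de) <= (D - 1) * m * (c + de) by lra.
by rewrite ler_pM2r.
Qed.

Lemma sum_id (R : realFieldType) d (delta : R) (N : 'M[R]_d) (x : 'I_d -> R) i :
  stochastic N ->
  \sum_j (N i j - delta) * (x j - x i) =
  \sum_j N i j * x j - delta * \sum_j x j - (1 - d%:R * delta) * x i.
Proof.
case=> _ Hs.
rewrite (eq_bigr (fun j => N i j * x j - delta * x j - (N i j * x i - delta * x i))); last first.
  by move=> j _; ring.
rewrite !sumrB -mulr_sumr -!mulr_suml Hs sumr_const card_ord.
rewrite -mulr_natl; ring.
Qed.

Lemma key (R : realFieldType) d (delta : R) (N : 'M[R]_d) (x : 'I_d -> R) m (i0 : 'I_d) :
  (2 <= d)%N -> 0 <= delta -> 0 < 1 - d%:R * delta -> delta_upper_bounded delta N ->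
  (forall i, `|\sum_j N i j * x j| <= m) ->
  forall j, (1 - d%:R * delta) * x j <= (d%:R - 1) * m.
Proof.
move=> Hd Hde Hc [Hst Hdiag Hoff] Hm j.
have m0 : 0 <= m by apply: le_trans (Hm i0).
have [ia Ha] := argmax_ex _ _ i0 x.
have [ib Hb] := argmin_ex _ _ i0 x.
set s := \sum_j x j.
have H1 : (1 - d%:R * delta) * x ia + delta * s <= m.
  have : 0 <= \sum_j (N ia j - delta) * (x j - x ia).
    apply: sumr_ge0 => k _.
    have [->|nk] := eqVneq k ia; first by rewrite subrr mulr0.
    apply: mulr_le0; rewrite subr_le0 ?Ha //.
    by apply: Hoff; rewrite eq_sym.
  rewrite sum_id //.
  have := ler_norm (\sum_j N ia j * x j).
  have := Hm ia.
  rewrite -/s. lra.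
have H2 : - m <= (1 - d%:R * delta) * x ib + delta * s.
  have : \sum_j (N ib j - delta) * (x j - x ib) <= 0.
    apply: sumr_le0 => k _.
    have [->|nk] := eqVneq k ib; first by rewrite subrr mulr0.
    apply: mulr_le0_ge0; rewrite ?subr_le0 ?subr_ge0 ?Hb //.
    by apply: Hoff; rewrite eq_sym.
  rewrite sum_id //.
  have := Hm ib.
  rewrite ler_norml -/s => /andP [H _]; lra.
have H3 : x ia + (d%:R - 1) * x ib <= s.
  have E : \sum_k (x k - x ib) = s - d%:R * x ib.
    by rewrite sumrB sumr_const card_ord mulr_natl.
  have : x ia - x ib <= \sum_k (x k - x ib).
    rewrite (bigD1 ia) //= lerDl.
    by apply: sumr_ge0 => k _; rewrite subr_ge0.
  rewrite E; lra.
have HD : 2 <= d%:R :> R by rewrite (ler_nat R 2 d).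
have := arith _ _ _ _ _ _ _ HD Hde Hc m0 H1 H2 H3.
have : (1 - d%:R * delta) * x j <= (1 - d%:R * delta) * x ia.
  by rewrite ler_pM2l.
lra.
Qed.

Theorem corollary14 (R : realFieldType) (d : nat) (delta : R) (N : 'M[R]_d) :
  (2 <= d)%N -> 0 <= delta -> delta < 1 / d%:R ->
  delta_upper_bounded delta N ->
  N \in unitmx /\
  inf_norm (invmx N) <= (d%:R - 1) / (1 - d%:R * delta).
Proof.
move=> Hd Hde Hdl Hub.
have d0 : (0 < d)%N by apply: leq_trans Hd.
have D0 : 0 < d%:R :> R by rewrite ltr0n.
have Hc : 0 < 1 - d%:R * delta.
  have : d%:R * delta < d%:R * (1 / d%:R) by rewrite ltr_pM2l.
  rewrite mul1r mulfV ?gt_eqF //; lra.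
set c := 1 - d%:R * delta in Hc *.
have HD : 2 <= d%:R :> R by rewrite (ler_nat R 2 d).
pose i0 : 'I_d := Ordinal d0.
have bound : forall (z : 'cV[R]_d) m, (forall i, `|(N *m z) i 0| <= m) ->
    forall j, c * `|z j 0| <= (d%:R - 1) * m.
  move=> z m Hm j.
  have Hm1 : forall i, `|\sum_k N i k * z k 0| <= m.
    by move=> i; have := Hm i; rewrite mxE.
  have Hm2 : forall i, `|\sum_k N i k * (- z k 0)| <= m.
    move=> i; rewrite (eq_bigr (fun k => - (N i k * z k 0))); last by move=> k _; rewrite mulrN.
    by rewrite sumrN normrN.
  have := key _ _ _ _ (fun k => z k 0) _ i0 Hd Hde Hc Hub Hm1 j.
  have := key _ _ _ _ (fun k => - z k 0) _ i0 Hd Hde Hc Hub Hm2 j.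
  rewrite /= -/c.
  case: (lerP 0 (z j 0)) => [/ger0_norm -> | /ltr0_norm ->]; lra.
have Nunit : N \in unitmx.
  rewrite unitmxE unitfE -det_tr; apply/negP => /det0P [v nv0 vN].
  move/eqP: nv0; apply; apply/rowP => j; rewrite mxE.
  have H0 : forall i, `|(N *m v^T) i 0| <= 0.
    move=> i; have -> : N *m v^T = (v *m N^T)^T by rewrite trmx_mul trmxK.
    by rewrite vN !mxE normr0.
  have := bound _ _ H0 j; rewrite mulr0 mxE => H.
  apply/eqP; rewrite -normr_eq0 eq_le normr_ge0 andbT.
  by rewrite -(ler_pM2l Hc) mulr0.
split => //.
rewrite /inf_norm; apply: bigmax_le => [|i _].
  by apply: divr_ge0; lra.
set B := invmx N.
pose x : 'cV[R]_d := \col_j (if 0 <= B i j then 1 else -1).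
have Hx : forall i, `|(N *m (B *m x)) i 0| <= 1.
  move=> k; rewrite mulmxA mulmxV // mul1mx mxE.
  by case: ifP; rewrite ?normrN normr1.
have := bound _ _ Hx i.
have -> : \sum_j `|B i j| = (B *m x) i 0.
  rewrite mxE; apply: eq_bigr => j _; rewrite mxE.
  case: ifP => [/ger0_norm -> | /negbT]; first by rewrite mulr1.
  by rewrite -ltNge => /ltr0_norm ->; rewrite mulrN1.
rewrite ler_pdivlMr // mulr1 => H.
have := ler_norm ((B *m x) i 0).
move: H; set u := (B *m x) i 0; set w := `|u|.
move=> H1 H2.
have : c * u <= c * w by rewrite ler_pM2l.
lra.
Qed.
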